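(* Let $\alpha\ge0$, $0\le\beta<1$, and let $f=h+\overline{g}\in\mathcal{W}_{\mathcal{H}}^0(\alpha,\beta)$ with $h(z)=z+\sum_{n\ge2}a_nz^n$, $g(z)=\sum_{n\ge2}b_nz^n$. Then for every $n\ge2$: (i) $|a_n|+|b_n|\le\dfrac{2(1-\beta)}{n(1+\alpha(n-1))}$; (ii) $\big||a_n|-|b_n|\big|\le\dfrac{2(1-\beta)}{n(1+\alpha(n-1))}$; (iii) $|a_n|\le\dfrac{2(1-\beta)}{n(1+\alpha(n-1))}$.
   Context: Let $\mathbb{D}=\{z\in\mathbb{C}:|z|<1\}$. $\mathcal{H}^0$ denotes the class of harmonic maps $f=h+\overline{g}$ on $\mathbb{D}$, with $h,g$ analytic in $\mathbb{D}$, $h(z)=z+\sum_{n\ge2}a_nz^n$ and $g(z)=\sum_{n\ge2}b_nz^n$. For $\alpha\ge0$, $0\le\beta<1$, $\mathcal{W}_{\mathcal{H}}^0(\alpha,\beta)$ denotes the class of $f=h+\overline{g}\in\mathcal{H}^0$ such that $\Re\big(h'(z)+\alpha zh''(z)-\beta\big)>|g'(z)+\alpha zg''(z)|$ for all $z\in\mathbb{D}$. *)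

(* Defs.v *)
From Stdlib Require Import Reals Lra.
Open Scope R_scope.

Definition Cplx : Type := (R * R)%type.
Definition Cre (z : Cplx) : R := fst z.
Definition Cim (z : Cplx) : R := snd z.
Definition RtoC (x : R) : Cplx := (x, 0).
Definition Cadd (z w : Cplx) : Cplx := (fst z + fst w, snd z + snd w).
Definition Csub (z w : Cplx) : Cplx := (fst z - fst w, snd z - snd w).
Definition Cmul (z w : Cplx) : Cplx :=
  (fst z * fst w - snd z * snd w, fst z * snd w + snd z * fst w).
Definition Cnorm (z : Cplx) : R := sqrt (fst z * fst z + snd z * snd z).
Fixpoint Cpow (z : Cplx) (n : nat) : Cplx :=
  match n with O => (1, 0) | S m => Cmul z (Cpow z m) end.

Fixpoint Cpsum (c : nat -> Cplx) (z : Cplx) (N : nat) : Cplx :=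
  match N with O => (0, 0) | S M => Cadd (Cpsum c z M) (Cmul (c M) (Cpow z M)) end.

Definition Cseries (c : nat -> Cplx) (z l : Cplx) : Prop :=
  forall eps, eps > 0 -> exists N0 : nat, forall N, (N >= N0)%nat ->
    Cnorm (Csub (Cpsum c z N) l) < eps.

Definition cderiv (f : Cplx -> Cplx) (z l : Cplx) : Prop :=
  forall eps, eps > 0 -> exists del, del > 0 /\ forall w,
    0 < Cnorm (Csub w z) < del ->
    Cnorm (Csub (Csub (f w) (f z)) (Cmul l (Csub w z))) <= eps * Cnorm (Csub w z).

Definition inD (z : Cplx) : Prop := Cnorm z < 1.

(* f = h + conj g is in W_H^0(alpha,beta), where the normalisations of h,g
   are given by their Taylor coefficients a, b (separately in the theorem). *)
Definition W_H0 (alpha beta : R) (h g : Cplx -> Cplx) : Prop :=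
  exists h1 h2 g1 g2 : Cplx -> Cplx,
    forall z, inD z ->
      cderiv h z (h1 z) /\ cderiv h1 z (h2 z) /\
      cderiv g z (g1 z) /\ cderiv g1 z (g2 z) /\
      Cre (Cadd (h1 z) (Cmul (RtoC alpha) (Cmul z (h2 z)))) - beta >
        Cnorm (Cadd (g1 z) (Cmul (RtoC alpha) (Cmul z (g2 z)))).

(* Main.v *)
Require Import Defs.
From Stdlib Require Import Reals Lra Lia.
From Coquelicot Require Import Complex.
Open Scope R_scope.


Section Aux.
Local Open Scope C_scope.

Lemma Cnorm_Cmod z : Cnorm z = Cmod z.
Proof. unfold Cnorm, Cmod. f_equal. simpl. ring. Qed.

Lemma Cpow_eq z n : Defs.Cpow z n = (z ^ n)%C.
Proof. induction n; simpl; [reflexivity| rewrite IHn; reflexivity]. Qed.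

Fixpoint csum (f : nat -> Complex.C) (n : nat) : Complex.C :=
  match n with O => 0 | S m => csum f m + f m end.
Fixpoint rsum (f : nat -> R) (n : nat) : R :=
  match n with O => 0%R | S m => (rsum f m + f m)%R end.

Lemma Cpsum_csum c z N : Cpsum c z N = csum (fun m => c m * z ^ m) N.
Proof. induction N; simpl; [reflexivity|]. rewrite IHN, Cpow_eq. reflexivity. Qed.

Definition CS (c : nat -> Complex.C) (z l : Complex.C) : Prop :=
  forall eps, (eps > 0)%R -> exists N0 : nat, forall N, (N >= N0)%nat ->
    (Cmod (csum (fun m => c m * z ^ m) N - l)%C < eps)%R.

Lemma Cseries_CS c z l : Cseries c z l -> CS c z l.
Proof.
  intros H eps He. destruct (H eps He) as [N0 HN]. exists N0. intros N HN'.
  specialize (HN N HN'). rewrite Cnorm_Cmod, Cpsum_csum in HN. exact HN.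
Qed.

Lemma csum_plus f g n : csum (fun i => f i + g i) n = csum f n + csum g n.
Proof. induction n; simpl. ring. rewrite IHn. ring. Qed.
Lemma csum_scal a f n : csum (fun i => a * f i) n = a * csum f n.
Proof. induction n; simpl. ring. rewrite IHn. ring. Qed.
Lemma csum_opp f n : csum (fun i => - f i) n = - csum f n.
Proof. induction n; simpl. ring. rewrite IHn. ring. Qed.
Lemma csum_minus f g n : csum (fun i => f i - g i) n = csum f n - csum g n.
Proof. induction n; simpl. ring. rewrite IHn. ring. Qed.
Lemma csum_ext f g n : (forall i, (i < n)%nat -> f i = g i) -> csum f n = csum g n.
Proof. induction n; intros H; simpl. reflexivity. rewrite IHn, H; auto. Qed.
Lemma csum_shift f n : csum f (S n) = f O + csum (fun i => f (S i)) n.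
Proof. induction n; simpl in *. ring. rewrite IHn. ring. Qed.
Lemma csum_swap (F : nat -> nat -> Complex.C) n m :
  csum (fun i => csum (fun j => F i j) m) n = csum (fun j => csum (fun i => F i j) n) m.
Proof.
  induction n; simpl.
  - induction m; simpl; [reflexivity| rewrite <- IHm; ring].
  - rewrite IHn, <- csum_plus. reflexivity.
Qed.
Lemma csum_conj f n : Cconj (csum f n) = csum (fun i => Cconj (f i)) n.
Proof.
  induction n; simpl. unfold Cconj; simpl. apply injective_projections; simpl; ring.
  rewrite Cplus_conj, IHn. reflexivity.
Qed.
Lemma Re_csum f n : Re (csum f n) = rsum (fun i => Re (f i)) n.
Proof. induction n; simpl. reflexivity. rewrite <- IHn. reflexivity. Qed.
Lemma Cmod_csum f n : (Cmod (csum f n) <= rsum (fun i => Cmod (f i)) n)%R.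
Proof.
  induction n; simpl. rewrite Cmod_0. lra.
  eapply Rle_trans. apply Cmod_triangle. lra.
Qed.
Lemma rsum_le f g n : (forall i, (i < n)%nat -> f i <= g i)%R -> (rsum f n <= rsum g n)%R.
Proof. induction n; intros H; simpl. lra. assert (f n <= g n)%R by (apply H; lia).
  assert (rsum f n <= rsum g n)%R by (apply IHn; intros; apply H; lia). lra. Qed.
Lemma rsum_plus f g n : rsum (fun i => f i + g i)%R n = (rsum f n + rsum g n)%R.
Proof. induction n; simpl. ring. rewrite IHn. ring. Qed.
Lemma rsum_scal a f n : rsum (fun i => a * f i)%R n = (a * rsum f n)%R.
Proof. induction n; simpl. ring. rewrite IHn. ring. Qed.
Lemma rsum_nonneg f n : (forall i, (i < n)%nat -> 0 <= f i)%R -> (0 <= rsum f n)%R.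
Proof. induction n; intros H; simpl. lra. assert (0 <= f n)%R by (apply H; lia).
  assert (0 <= rsum f n)%R by (apply IHn; intros; apply H; lia). lra. Qed.
Lemma rsum_term f n i : (forall j, (j < n)%nat -> 0 <= f j)%R -> (i < n)%nat -> (f i <= rsum f n)%R.
Proof.
  induction n; intros H Hi. lia. simpl.
  assert (0 <= f n)%R by (apply H; lia).
  assert (0 <= rsum f n)%R by (apply rsum_nonneg; intros; apply H; lia).
  destruct (Nat.eq_dec i n). subst; lra.
  assert (f i <= rsum f n)%R by (apply IHn; [intros; apply H; lia| lia]). lra.
Qed.

Lemma geom_sum t n : (0 <= t < 1)%R -> (rsum (fun i => t ^ i) n <= / (1 - t))%R.
Proof.
  intros Ht. assert (H: ((1 - t) * rsum (fun i => t ^ i) n = 1 - t ^ n)%R).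
  { induction n; simpl. ring. rewrite Rmult_plus_distr_l, IHn. ring. }
  assert (0 <= t ^ n)%R by (apply pow_le; lra).
  apply (Rmult_le_reg_l (1 - t)). lra. rewrite H, Rinv_r by lra. lra.
Qed.

Lemma geom_tail t L n : (0 <= t < 1)%R ->
  (rsum (fun i => if Nat.leb L i then t ^ i else 0) n <= t ^ L / (1 - t))%R.
Proof.
  intros Ht.
  assert (H: forall n, ((1 - t) * rsum (fun i => if Nat.leb L i then t ^ i else 0) n
     = t ^ L - t ^ (Nat.max L n))%R).
  { induction n0; simpl.
    - rewrite Nat.max_0_r. ring.
    - rewrite Rmult_plus_distr_l, IHn0. destruct (Nat.leb_spec L n0).
      + rewrite !Nat.max_r by lia. simpl. ring.
      + rewrite !Nat.max_l by lia. ring. }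
  assert (0 <= t ^ Nat.max L n)%R by (apply pow_le; lra).
  apply (Rmult_le_reg_l (1 - t)). lra. rewrite H. unfold Rdiv.
  rewrite (Rmult_comm (t ^ L)), <- Rmult_assoc, Rinv_r by lra. lra.
Qed.

End Aux.


Section Ser.
Local Open Scope C_scope.

Lemma CS_plus c d z l1 l2 : CS c z l1 -> CS d z l2 -> CS (fun m => c m + d m) z (l1 + l2).
Proof.
  intros H1 H2 eps He.
  destruct (H1 (eps/2)%R ltac:(lra)) as [N1 HN1].
  destruct (H2 (eps/2)%R ltac:(lra)) as [N2 HN2].
  exists (Nat.max N1 N2). intros N HN.
  specialize (HN1 N ltac:(lia)). specialize (HN2 N ltac:(lia)).
  replace (csum (fun m => (c m + d m) * z ^ m) N - (l1 + l2))
    with ((csum (fun m => c m * z ^ m) N - l1) + (csum (fun m => d m * z ^ m) N - l2)).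
  eapply Rle_lt_trans. apply Cmod_triangle. lra.
  rewrite (csum_ext (fun m => (c m + d m) * z ^ m) (fun m => c m * z ^ m + d m * z ^ m)).
  rewrite csum_plus. ring. intros; ring.
Qed.

Lemma CS_scal a c z l : CS c z l -> CS (fun m => a * c m) z (a * l).
Proof.
  intros H eps He.
  destruct (H (eps / (Cmod a + 1))%R) as [N0 HN].
  { apply Rdiv_lt_0_compat. lra. pose proof (Cmod_ge_0 a). lra. }
  exists N0. intros N HN'. specialize (HN N HN').
  replace (csum (fun m => a * c m * z ^ m) N - a * l) with (a * (csum (fun m => c m * z ^ m) N - l)).
  rewrite Cmod_mult. pose proof (Cmod_ge_0 a).
  pose proof (Cmod_ge_0 (csum (fun m => c m * z ^ m) N - l)).
  apply Rle_lt_trans with ((Cmod a + 1) * Cmod ((csum (fun m : nat => c m * z ^ m) N - l)%C))%R. nra.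
  apply (Rmult_lt_compat_l (Cmod a + 1)) in HN. 2: lra.
  unfold Rdiv in HN. rewrite (Rmult_comm eps), <- Rmult_assoc, Rinv_r, Rmult_1_l in HN by lra. exact HN.
  rewrite (csum_ext (fun m => a * c m * z ^ m) (fun m => a * (c m * z ^ m))).
  rewrite csum_scal. ring. intros; ring.
Qed.

Lemma CS_ext c d z l : (forall m, c m = d m) -> CS c z l -> CS d z l.
Proof.
  intros E H eps He. destruct (H eps He) as [N0 HN]. exists N0. intros N HN'.
  rewrite (csum_ext _ (fun m => c m * z ^ m)). auto. intros; rewrite E; reflexivity.
Qed.

Lemma CS_shift c z l : CS c z l ->
  CS (fun m => match m with O => 0 | S k => c k end) z (z * l).
Proof.
  intros H eps He.
  destruct (H (eps / (Cmod z + 1))%R) as [N0 HN].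
  { apply Rdiv_lt_0_compat. lra. pose proof (Cmod_ge_0 z). lra. }
  exists (S N0). intros N HN'. destruct N as [|N]. lia. specialize (HN N ltac:(lia)).
  rewrite csum_shift.
  replace (0 * z ^ 0 + csum (fun i => c i * z ^ S i) N - z * l) with (z * (csum (fun m => c m * z ^ m) N - l)).
  rewrite Cmod_mult. pose proof (Cmod_ge_0 z).
  pose proof (Cmod_ge_0 (csum (fun m => c m * z ^ m) N - l)).
  apply Rle_lt_trans with ((Cmod z + 1) * Cmod ((csum (fun m : nat => c m * z ^ m) N - l)%C))%R. nra.
  apply (Rmult_lt_compat_l (Cmod z + 1)) in HN. 2: lra.
  unfold Rdiv in HN. rewrite (Rmult_comm eps), <- Rmult_assoc, Rinv_r, Rmult_1_l in HN by lra. exact HN.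
  rewrite (csum_ext (fun i => c i * z ^ S i) (fun i => z * (c i * z ^ i))).
  rewrite csum_scal. simpl. ring. intros; simpl; ring.
Qed.

Lemma csum_zero n : csum (fun _ => 0) n = 0.
Proof. induction n; simpl. reflexivity. rewrite IHn. ring. Qed.

Lemma CS_const b z : CS (fun m => match m with O => b | _ => 0 end) z b.
Proof.
  intros eps He. exists 1%nat. intros N HN. destruct N. lia.
  rewrite csum_shift, (csum_ext _ (fun _ => 0)) by (intros; simpl; ring).
  rewrite csum_zero. replace (b * z ^ 0 + 0 - b) with (RtoC 0) by (simpl; ring).
  rewrite Cmod_0. lra.
Qed.

Lemma CS_bounded c z l : CS c z l -> exists K, forall n, (Cmod (c n * z ^ n) <= K)%R.
Proof.
  intros H. destruct (H 1%R ltac:(lra)) as [N0 HN].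
  exists (2 + rsum (fun i => Cmod (c i * z ^ i)) N0)%R. intros n.
  assert (0 <= rsum (fun i => Cmod (c i * z ^ i)) N0)%R by (apply rsum_nonneg; intros; apply Cmod_ge_0).
  destruct (Compare_dec.lt_dec n N0).
  - pose proof (rsum_term (fun i => Cmod (c i * z ^ i)) N0 n ltac:(intros; apply Cmod_ge_0) l0). simpl in H1. lra.
  - pose proof (HN n ltac:(lia)). pose proof (HN (S n) ltac:(lia)). simpl in H2.
    replace (c n * z ^ n) with ((csum (fun m : nat => c m * z ^ m) n + c n * z ^ n - l) - (csum (fun m : nat => c m * z ^ m) n - l)) by ring.
    eapply Rle_trans. unfold Cminus at 1. apply Cmod_triangle. rewrite Cmod_opp. lra.
Qed.

End Ser.

Lemma bernoulli u n : 0 <= u -> 1 + INR n * u <= (1 + u) ^ n.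
Proof.
  intros Hu. induction n. simpl. lra.
  rewrite S_INR. simpl. assert (0 <= INR n) by apply pos_INR.
  assert (0 <= INR n * u * u) by (apply Rmult_le_pos; [apply Rmult_le_pos|]; lra). nra.
Qed.

Lemma poly1 t : 0 <= t < 1 -> exists B, forall n, INR n * t ^ n <= B.
Proof.
  intros Ht. destruct (Req_dec t 0) as [->|Ht0].
  - exists 0. intros [|n]. simpl. lra. simpl. lra.
  - set (u := / t - 1). assert (Hu : 0 < u).
    { unfold u. assert (1 < / t). { rewrite <- Rinv_1. apply Rinv_lt_contravar; lra. } lra. }
    exists (/ u). intros n. pose proof (bernoulli u n ltac:(lra)).
    assert (E : (1 + u) * t = 1) by (unfold u; field; auto).
    assert (Ep : (1 + u) ^ n * t ^ n = 1) by (rewrite <- Rpow_mult_distr, E; apply pow1).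
    assert (0 <= t ^ n) by (apply pow_le; lra).
    apply (Rmult_le_reg_l u). lra. rewrite Rinv_r by lra.
    assert (INR n * u * t ^ n <= (1 + u) ^ n * t ^ n - t ^ n) by nra. nra.
Qed.

Lemma poly2 t : 0 <= t < 1 -> exists B, forall n, INR n ^ 2 * t ^ n <= B.
Proof.
  intros Ht. destruct (poly1 (sqrt t)) as [B HB].
  { split. apply sqrt_pos. rewrite <- sqrt_1. apply sqrt_lt_1; lra. }
  exists (B ^ 2). intros n. specialize (HB n).
  assert (0 <= INR n * sqrt t ^ n) by (apply Rmult_le_pos; [apply pos_INR| apply pow_le, sqrt_pos]).
  replace (INR n ^ 2 * t ^ n) with ((INR n * sqrt t ^ n) ^ 2).
  apply pow_incr. lra.
  rewrite Rpow_mult_distr, <- pow_mult, Nat.mul_comm, pow_mult, pow2_sqrt by lra. reflexivity.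
Qed.

Lemma poly2geom t : 0 <= t < 1 -> exists C s, 0 <= s < 1 /\ forall n, INR n ^ 2 * t ^ n <= C * s ^ n.
Proof.
  intros Ht. set (s := (1 + t) / 2). destruct (poly2 (t / s)) as [B HB].
  { unfold s. split. apply Rmult_le_pos; [lra| apply Rlt_le, Rinv_0_lt_compat; lra]. apply Rmult_lt_reg_r with ((1+t)/2). lra.
    unfold Rdiv. rewrite Rmult_assoc, Rinv_l, Rmult_1_r, Rmult_1_l by lra. lra. }
  exists B, s. split. unfold s; lra. intros n. specialize (HB n).
  assert (0 < s) by (unfold s; lra).
  replace (t ^ n) with ((t / s) ^ n * s ^ n).
  assert (0 <= s ^ n) by (apply pow_le; lra). nra.
  rewrite <- Rpow_mult_distr. f_equal. field. lra.
Qed.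


Definition cder (f : Complex.C -> Complex.C) (z l : Complex.C) : Prop :=
  forall eps, eps > 0 -> exists del, del > 0 /\ forall w,
    0 < Cmod (w - z)%C < del -> Cmod (f w - f z - l * (w - z))%C <= eps * Cmod (w - z)%C.

Lemma cderiv_cder f z l : cderiv f z l -> cder f z l.
Proof.
  intros H eps He. destruct (H eps He) as [del [Hd Hw]]. exists del. split; auto.
  intros w Hw'. rewrite <- !Cnorm_Cmod in *. apply Hw. exact Hw'.
Qed.

Lemma Cmod_pow_le x n rho : Cmod x <= rho -> Cmod (x ^ n)%C <= rho ^ n.
Proof. intros H. rewrite Cmod_pow. apply pow_incr. split; auto. apply Cmod_ge_0. Qed.

Definition Fterm (w z : Complex.C) (n : nat) : Complex.C :=
  (w ^ S n - z ^ S n - RtoC (INR (S n)) * z ^ n * (w - z))%C.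

Lemma Fbound w z rho n : Cmod w <= rho -> Cmod z <= rho -> 0 < rho ->
  rho * Cmod (Fterm w z n) <= INR n ^ 2 * rho ^ n * Cmod (w - z)%C ^ 2.
Proof.
  intros Hw Hz Hr. induction n.
  - unfold Fterm. replace (w ^ 1 - z ^ 1 - RtoC (INR 1) * z ^ 0 * (w - z))%C with (RtoC 0).
    rewrite Cmod_0. simpl. lra. simpl. ring.
  - assert (E : Fterm w z (S n) = (w * Fterm w z n + RtoC (INR (S n)) * z ^ n * ((w - z) * (w - z)))%C).
    { unfold Fterm. rewrite (S_INR (S n)), RtoC_plus. simpl. ring. }
    rewrite E. set (d := Cmod (w - z)%C) in *. set (F := Cmod (Fterm w z n)) in *.
    assert (0 <= d) by apply Cmod_ge_0. assert (0 <= F) by apply Cmod_ge_0.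
    assert (Hb : Cmod (w * Fterm w z n + RtoC (INR (S n)) * z ^ n * ((w - z) * (w - z)))%C
      <= Cmod w * F + INR (S n) * rho ^ n * (d * d)).
    { eapply Rle_trans. apply Cmod_triangle. rewrite !Cmod_mult, Cmod_R, Rabs_pos_eq by apply pos_INR.
      fold d F. pose proof (Cmod_pow_le z n rho Hz).
      assert (0 <= INR (S n)) by apply pos_INR.
      assert (0 <= d * d) by nra. apply Rplus_le_compat_l.
      rewrite Rmult_assoc, Rmult_assoc. apply Rmult_le_compat_l. auto. 
      apply Rmult_le_compat_r; nra. }
    assert (0 <= Cmod w) by apply Cmod_ge_0.
    assert (0 <= rho ^ n) by (apply pow_le; lra).
    rewrite S_INR in *. simpl pow in *. assert (0 <= INR n) by apply pos_INR.
    assert (HH1 : rho * (Cmod w * F) <= INR n * (INR n * 1) * rho ^ n * (d * (d * 1)) * rho).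
    { replace (rho * (Cmod w * F)) with (Cmod w * (rho * F)) by ring.
      apply Rle_trans with (rho * (rho * F)). apply Rmult_le_compat_r. nra. auto. nra. }
    assert (0 <= rho ^ n * (d*d)) by nra.
    apply Rle_trans with (rho * (Cmod w * F + (INR n + 1) * rho ^ n * (d * d))).
    apply Rmult_le_compat_l; lra.
    assert (0 <= rho * rho ^ n * (d * d)) by nra.
    set (T := rho * rho ^ n * (d * d)) in *.
    replace (rho * (Cmod w * F + (INR n + 1) * rho ^ n * (d * d))) with (rho * (Cmod w * F) + (INR n + 1) * T) by (unfold T; ring).
    replace ((INR n + 1) * ((INR n + 1) * 1) * (rho * rho ^ n) * (d * (d * 1))) with ((INR n + 1) * (INR n + 1) * T) by (unfold T; ring).
    replace (INR n * (INR n * 1) * rho ^ n * (d * (d * 1)) * rho) with (INR n * INR n * T) in HH1 by (unfold T; ring).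
    nra.
Qed.

Lemma deriv_CS c f z l : (forall w, Cmod w < 1 -> CS c w (f w)) -> Cmod z < 1 -> cder f z l ->
  CS (fun m => RtoC (INR (S m)) * c (S m))%C z l.
Proof.
  intros Hser Hz Hder.
  set (r0 := Cmod z) in *. assert (0 <= r0) by apply Cmod_ge_0.
  set (rho := (1 + r0) / 2). set (rho' := (3 + r0) / 4).
  assert (Hr : 0 < rho) by (unfold rho; lra). assert (Hr' : 0 < rho') by (unfold rho'; lra).
  destruct (CS_bounded _ _ _ (Hser (RtoC rho') ltac:(rewrite Cmod_R, Rabs_pos_eq; unfold rho'; [idtac|idtac]; lra))) as [K HK].
  assert (HK' : forall n, Cmod (c n) * rho' ^ n <= K).
  { intros n. specialize (HK n). rewrite Cmod_mult, Cmod_pow, Cmod_R, Rabs_pos_eq in HK by lra. exact HK. }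
  assert (HK0 : 0 <= K) by (specialize (HK' O); pose proof (Cmod_ge_0 (c O)); rewrite pow_O, Rmult_1_r in HK'; lra).
  set (tau := rho / rho').
  assert (Htau : 0 <= tau < 1).
  { unfold tau. split. apply Rmult_le_pos; [lra| apply Rlt_le, Rinv_0_lt_compat; lra].
    apply Rmult_lt_reg_r with rho'. lra. unfold Rdiv. rewrite Rmult_assoc, Rinv_l by lra. unfold rho, rho'; lra. }
  destruct (poly2geom tau Htau) as [C2 [sig [Hsig HC2]]].
  assert (HC20 : 0 <= C2) by (specialize (HC2 O); simpl in HC2; lra).
  set (K2 := K * C2 / (rho * rho') / (1 - sig)).
  assert (HK20 : 0 <= K2).
  { unfold K2. unfold Rdiv. repeat apply Rmult_le_pos; auto; apply Rlt_le, Rinv_0_lt_compat; nra. }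
  assert (HP : forall w, Cmod w <= rho -> forall N,
     Cmod (csum (fun m => c (S m) * Fterm w z m)%C N) <= K2 * Cmod (w - z)%C ^ 2).
  { intros w Hw N. eapply Rle_trans. apply Cmod_csum.
    set (d := Cmod (w - z)%C). assert (0 <= d) by apply Cmod_ge_0.
    apply Rle_trans with (rsum (fun m => (K * C2 / (rho * rho') * d ^ 2) * sig ^ m) N).
    - apply rsum_le. intros m _. rewrite Cmod_mult.
      set (A := Cmod (c (S m))). set (Fm := Cmod (Fterm w z m)).
      assert (0 <= A) by apply Cmod_ge_0. assert (0 <= Fm) by apply Cmod_ge_0.
      pose proof (Fbound w z rho m Hw ltac:(change (Cmod z) with r0; unfold rho; lra) Hr) as h1. fold Fm d in h1.
      pose proof (HK' (S m)) as h2. fold A in h2. pose proof (HC2 m) as h3.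
      assert (Et : rho ^ m = tau ^ m * rho' ^ m) by (rewrite <- Rpow_mult_distr; unfold tau; f_equal; field; lra).
      assert (0 <= tau ^ m) by (apply pow_le; lra). assert (0 < rho' ^ m) by (apply pow_lt; lra).
      assert (0 <= INR m ^ 2) by (apply pow_le, pos_INR).
      assert (0 <= d ^ 2) by (apply pow_le; lra).
      apply (Rmult_le_reg_l (rho * rho')). nra.
      replace (rho * rho' * (K * C2 / (rho * rho') * d ^ 2 * sig ^ m)) with (K * (C2 * sig ^ m) * d ^ 2) by (field; lra).
      apply Rle_trans with (rho' * A * (INR m ^ 2 * rho ^ m * d ^ 2)).
      { replace (rho * rho' * (A * Fm)) with (rho' * A * (rho * Fm)) by ring.
        apply Rmult_le_compat_l. nra. exact h1. }
      rewrite Et. simpl pow in h2.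
      replace (rho' * A * (INR m ^ 2 * (tau ^ m * rho' ^ m) * d ^ 2)) with ((A * (rho' * rho' ^ m)) * (INR m ^ 2 * tau ^ m) * d ^ 2) by ring.
      apply Rmult_le_compat_r. auto. apply Rmult_le_compat; try nra.
      apply Rmult_le_pos; [lra| apply Rmult_le_pos; lra].
    - rewrite (rsum_scal (K * C2 / (rho * rho') * d ^ 2) (fun m => sig ^ m)). unfold K2. 
      assert (0 <= K * C2 / (rho * rho') * d ^ 2).
      { unfold Rdiv. apply Rmult_le_pos. apply Rmult_le_pos. apply Rmult_le_pos; auto.
        apply Rlt_le, Rinv_0_lt_compat; nra. apply pow_le; lra. }
      pose proof (geom_sum sig N Hsig).
      apply Rle_trans with (K * C2 / (rho * rho') * d ^ 2 * / (1 - sig)). apply Rmult_le_compat_l; auto.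
      right. unfold Rdiv. ring. }
  intros eps He. set (eta := eps / 4).
  destruct (Hder eta ltac:(unfold eta; lra)) as [del [Hdel Hd]].
  set (delta := Rmin (del / 2) (Rmin (rho - r0) (eta / (K2 + 1)))).
  assert (Hdp : 0 < delta).
  { unfold delta. apply Rmin_pos. lra. apply Rmin_pos. unfold rho; lra. apply Rdiv_lt_0_compat; unfold eta; lra. }
  assert (Hd1 : delta <= del / 2) by apply Rmin_l.
  assert (Hd2 : delta <= rho - r0) by (eapply Rle_trans; [apply Rmin_r| apply Rmin_l]).
  assert (Hd3 : delta <= eta / (K2 + 1)) by (eapply Rle_trans; [apply Rmin_r| apply Rmin_r]).
  set (w := (z + RtoC delta)%C).
  assert (Ewz : (w - z)%C = RtoC delta) by (unfold w; ring).
  assert (Hwz : Cmod (w - z)%C = delta) by (rewrite Ewz, Cmod_R, Rabs_pos_eq; lra).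
  assert (Hw : Cmod w <= rho).
  { unfold w. eapply Rle_trans. apply Cmod_triangle. rewrite Cmod_R, Rabs_pos_eq by lra. fold r0. lra. }
  assert (Hed : eta * delta > 0) by (unfold eta; nra).
  destruct (Hser w ltac:(unfold rho in Hw; lra) (eta * delta) Hed) as [N1 HN1].
  destruct (Hser z Hz (eta * delta) Hed) as [N2 HN2].
  exists (Nat.max N1 N2). intros N HN.
  specialize (HN1 (S N) ltac:(lia)). specialize (HN2 (S N) ltac:(lia)).
  specialize (Hd w ltac:(rewrite Hwz; lra)). rewrite Hwz in Hd.
  specialize (HP w Hw N). rewrite Hwz in HP.
  set (D := csum (fun m => RtoC (INR (S m)) * c (S m) * z ^ m)%C N).
  set (Sw := csum (fun m => c m * w ^ m)%C (S N)).
  set (Sz := csum (fun m => c m * z ^ m)%C (S N)).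
  set (P := csum (fun m => c (S m) * Fterm w z m)%C N).
  assert (EP : P = (Sw - Sz - (w - z) * D)%C).
  { unfold P, Sw, Sz, D. rewrite !csum_shift.
    rewrite <- csum_scal.
    replace (c 0%nat * w ^ 0 + csum (fun i => c (S i) * w ^ S i) N - (c 0%nat * z ^ 0 + csum (fun i => c (S i) * z ^ S i) N) - csum (fun i => (w - z) * (RtoC (INR (S i)) * c (S i) * z ^ i)) N)%C
     with (csum (fun i => c (S i) * w ^ S i) N - csum (fun i => c (S i) * z ^ S i) N - csum (fun i => (w - z) * (RtoC (INR (S i)) * c (S i) * z ^ i)) N)%C by (simpl; ring).
    rewrite <- csum_minus, <- csum_minus. apply csum_ext. intros i _. unfold Fterm. ring. }
  assert (Eid : (RtoC delta * (D - l))%C = ((f w - f z - l * (w - z)) - P - (f w - Sw) + (f z - Sz))%C).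
  { rewrite EP, Ewz. ring. }
  assert (Hm : delta * Cmod (D - l)%C < eps * delta).
  { rewrite <- (Rabs_pos_eq delta) at 1 by lra. rewrite <- Cmod_R, <- Cmod_mult, Eid.
    eapply Rle_lt_trans. apply Cmod_triangle.
    assert (Cmod (f z - Sz)%C < eta * delta).
    { unfold Sz. rewrite <- Cmod_opp. replace (- (f z - csum (fun m : nat => c m * z ^ m) (S N)))%C with (csum (fun m : nat => c m * z ^ m) (S N) - f z)%C by ring. exact HN2. }
    assert (Cmod (- (f w - Sw))%C < eta * delta).
    { unfold Sw. replace (- (f w - csum (fun m : nat => c m * w ^ m) (S N)))%C with (csum (fun m : nat => c m * w ^ m) (S N) - f w)%C by ring. exact HN1. }
    assert (Cmod (f w - f z - l * (w - z) - P - (f w - Sw))%C <= eta * delta + K2 * delta ^ 2 + Cmod (- (f w - Sw))%C).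
    { unfold Cminus at 1. eapply Rle_trans. apply Cmod_triangle. apply Rplus_le_compat_r.
      unfold Cminus at 1. eapply Rle_trans. apply Cmod_triangle. rewrite Cmod_opp. fold P in HP. lra. }
    assert (K2 * delta ^ 2 <= eta * delta).
    { simpl. replace (K2 * (delta * (delta * 1))) with ((K2 * delta) * delta) by ring.
      apply Rmult_le_compat_r. lra.
      apply Rle_trans with (K2 * (eta / (K2 + 1))). apply Rmult_le_compat_l; auto.
      unfold Rdiv. apply Rmult_le_reg_r with (K2 + 1). lra.
      rewrite Rmult_assoc, Rmult_assoc, Rinv_l by lra. unfold eta. nra. }
    unfold eta in *. lra. }

  apply Rmult_lt_reg_l with delta. lra. rewrite (Rmult_comm delta eps). exact Hm.
Qed.


Definition zeta (M : nat) : Complex.C := (cos (2 * PI / INR M), sin (2 * PI / INR M)).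

Lemma zeta_pow M n : (zeta M ^ n)%C = (cos (INR n * (2 * PI / INR M)), sin (INR n * (2 * PI / INR M))).
Proof.
  induction n.
  - simpl. rewrite Rmult_0_l, cos_0, sin_0. reflexivity.
  - rewrite Cpow_S, IHn. unfold zeta. rewrite S_INR.
    replace ((INR n + 1) * (2 * PI / INR M)) with (2 * PI / INR M + INR n * (2 * PI / INR M)) by ring.
    rewrite cos_plus, sin_plus. unfold Cmult. simpl. f_equal; ring.
Qed.

Lemma Cmod_cs x : Cmod (cos x, sin x) = 1.
Proof. unfold Cmod. simpl fst; simpl snd. rewrite <- sqrt_1. f_equal. rewrite <- (sin2_cos2 x). unfold Rsqr. ring. Qed.

Lemma Cmod_zeta_pow M n : Cmod (zeta M ^ n)%C = 1.
Proof. rewrite zeta_pow. apply Cmod_cs. Qed.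

Lemma zeta_M M : (0 < M)%nat -> (zeta M ^ M)%C = 1.
Proof.
  intros H. rewrite zeta_pow. replace (INR M * (2 * PI / INR M)) with (2 * PI).
  rewrite cos_2PI, sin_2PI. reflexivity. field. apply not_0_INR. lia.
Qed.

Lemma zeta_ne1 M p : (0 < M)%nat -> (p mod M <> 0)%nat -> (zeta M ^ p)%C <> 1.
Proof.
  intros HM Hp E. rewrite zeta_pow in E.
  assert (Hc : cos (INR p * (2 * PI / INR M)) = 1) by (injection E; auto).
  assert (Hs : sin (INR p * (2 * PI / INR M)) = 0) by (injection E; auto).
  pose proof (Nat.div_mod p M ltac:(lia)) as Hd.
  set (q := (p / M)%nat) in *. set (s := (p mod M)%nat) in *.
  assert (Hsl : (s < M)%nat) by (unfold s; apply Nat.mod_upper_bound; lia).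
  assert (HMr : 0 < INR M) by (apply lt_0_INR; lia).
  assert (Ex : INR p * (2 * PI / INR M) = INR s * (2 * PI / INR M) + 2 * INR q * PI).
  { rewrite Hd at 1. rewrite plus_INR, mult_INR. field. lra. }
  rewrite Ex, cos_period in Hc. rewrite Ex, sin_period in Hs.
  set (y := INR s * (2 * PI / INR M)) in *.
  assert (Hs0 : 0 < INR s) by (apply lt_0_INR; lia).
  assert (HsM : INR s < INR M) by (apply lt_INR; lia).
  assert (Hy0 : 0 < y) by (unfold y; apply Rmult_lt_0_compat; [lra| apply Rdiv_lt_0_compat; [pose proof PI_RGT_0; lra| lra]]).
  assert (Hy1 : y < 2 * PI).
  { unfold y. apply Rmult_lt_reg_r with (INR M). lra. unfold Rdiv.
    replace (INR s * (2 * PI * / INR M) * INR M) with (INR s * (2 * PI)) by (field; lra).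
    pose proof PI_RGT_0. nra. }
  destruct (sin_eq_O_2PI_0 y ltac:(lra) ltac:(lra) Hs) as [H|[H|H]]; try lra.
  rewrite H, cos_PI in Hc. lra.
Qed.

Lemma geom_telescope (x : Complex.C) n : ((x - 1) * csum (fun j => x ^ j) n = x ^ n - 1)%C.
Proof. induction n; simpl. ring. rewrite Cmult_plus_distr_l, IHn. ring. Qed.

Definition dlt (M p : nat) : R := if Nat.eqb (p mod M) 0 then 1 else 0.

Lemma root_sum M p : (0 < M)%nat ->
  csum (fun j => (zeta M ^ p) ^ j)%C M = RtoC (INR M * dlt M p).
Proof.
  intros HM. unfold dlt. destruct (Nat.eqb_spec (p mod M) 0) as [H|H].
  - pose proof (Nat.div_mod p M ltac:(lia)) as Hd. rewrite H, Nat.add_0_r in Hd.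
    assert (E : (zeta M ^ p)%C = 1). { rewrite Hd, Cpow_mult_r, zeta_M by auto. apply Cpow_1_l. }
    rewrite E. rewrite Rmult_1_r. clear. induction M. reflexivity. rewrite S_INR, RtoC_plus. simpl csum. rewrite IHM, Cpow_1_l. reflexivity.
  - pose proof (geom_telescope (zeta M ^ p) M) as G.
    rewrite <- Cpow_mult_r, Nat.mul_comm, Cpow_mult_r, zeta_M, Cpow_1_l in G by auto.
    replace (RtoC 1 - RtoC 1)%C with (RtoC 0) in G by ring. rewrite Rmult_0_r.
    pose proof (zeta_ne1 M p HM H) as Hne.
    assert (Hnz : (zeta M ^ p - 1)%C <> 0%R) by (apply Cminus_eq_contra; auto).
    apply (f_equal (Cmult (/ (zeta M ^ p - 1)))) in G.
    rewrite Cmult_assoc, Cinv_l, Cmult_1_l, Cmult_0_r in G by auto. exact G.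
Qed.

Lemma zeta_conj M m : (0 < M)%nat -> Cconj (zeta M ^ m)%C = (zeta M ^ (m * (M - 1)))%C.
Proof.
  intros HM. rewrite !zeta_pow. unfold Cconj. simpl.
  assert (HMr : 0 < INR M) by (apply lt_0_INR; lia).
  assert (E : INR (m * (M - 1)) * (2 * PI / INR M) = - (INR m * (2 * PI / INR M)) + 2 * INR m * PI).
  { rewrite mult_INR, minus_INR by lia. simpl. field. lra. }
  rewrite E, cos_period, sin_period, cos_neg, sin_neg. reflexivity.
Qed.


Lemma modA M m k : (2*k < M)%nat -> (m < M - k)%nat -> m <> k -> ((m + (M - k)) mod M <> 0)%nat.
Proof. intros. destruct (Nat.lt_ge_cases (m + (M - k)) M).
  rewrite Nat.mod_small by lia. lia.
  rewrite <- (Nat.mod_unique (m + (M - k)) M 1 (m + (M - k) - M)); lia. Qed.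
Lemma modB M m k : (1 <= k)%nat -> (2*k < M)%nat -> (m < M - k)%nat -> ((m * (M - 1) + (M - k)) mod M <> 0)%nat.
Proof. intros. rewrite <- (Nat.mod_unique _ M m (M - m - k)). lia. lia. nia. Qed.
Lemma modC M k : (2*k < M)%nat -> ((k + (M - k)) mod M = 0)%nat.
Proof. intros. replace (k + (M - k))%nat with M by lia. apply Nat.Div0.mod_same. Qed.
Lemma modD M m : (0 < m)%nat -> (m < M)%nat -> (m mod M <> 0)%nat.
Proof. intros. rewrite Nat.mod_small; lia. Qed.

Lemma Rabs_le_inv' x a : Rabs x <= a -> - a <= x <= a.
Proof. unfold Rabs. destruct (Rcase_abs x); lra. Qed.
Lemma rsum_ext f g n : (forall i, f i = g i) -> rsum f n = rsum g n.
Proof. intros H. induction n; simpl; [reflexivity| rewrite IHn, H; reflexivity]. Qed.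

Lemma re_sub_le (a b : Complex.C) : Re a - Re b <= Cmod (a - b)%C /\ Re b - Re a <= Cmod (a - b)%C.
Proof. pose proof (re_le_Cmod (a - b)%C) as H. apply Rabs_le_inv' in H.
  replace (Re (a - b)%C) with (Re a - Re b) in H by (destruct a, b; unfold Re, Cminus, Cplus, Copp; simpl; ring). lra. Qed.

Lemma Cminus0 (x : Complex.C) : (x - RtoC 0)%C = x.
Proof. ring. Qed.

Lemma dlt_0 M p : (p mod M <> 0)%nat -> dlt M p = 0.
Proof. intros H. unfold dlt. destruct (Nat.eqb_spec (p mod M) 0); [contradiction| reflexivity]. Qed.
Lemma dlt_1 M p : (p mod M = 0)%nat -> dlt M p = 1.
Proof. intros H. unfold dlt. rewrite H. reflexivity. Qed.
Lemma dlt_range M p : 0 <= dlt M p <= 1.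
Proof. unfold dlt. destruct (Nat.eqb _ _); lra. Qed.

Lemma finite_N (P : nat -> nat -> Prop) M :
  (forall j, (j < M)%nat -> exists N0, forall N, (N >= N0)%nat -> P j N) ->
  exists N0, forall j N, (j < M)%nat -> (N >= N0)%nat -> P j N.
Proof.
  induction M; intros H. exists O. intros; lia.
  destruct IHM as [N1 H1]. intros; apply H; lia.
  destruct (H M ltac:(lia)) as [N2 H2]. exists (Nat.max N1 N2). intros j N Hj HN.
  destruct (Nat.eq_dec j M). subst; apply H2; lia. apply H1; lia.
Qed.

Lemma rsum_const c n : rsum (fun _ => c) n = INR n * c.
Proof. induction n; simpl rsum. simpl; ring. rewrite IHn, S_INR. ring. Qed.

Lemma rsum_ind0 c N : (1 <= N)%nat -> rsum (fun m => if Nat.eqb m 0 then c else 0) N = c.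
Proof. induction N; intros H. lia. simpl rsum. destruct N. simpl. ring.
  rewrite IHN by lia. simpl. ring. Qed.

Lemma csum_indk (a : Complex.C) k N : (k < N)%nat -> csum (fun m => if Nat.eqb m k then a else 0%R) N = a.
Proof. induction N; intros H. lia. simpl csum. destruct (Nat.eq_dec k N).
  - subst. rewrite Nat.eqb_refl. replace (csum (fun m => if Nat.eqb m N then a else 0%R) N) with (RtoC 0).
    ring. clear H. assert (forall N', (N' <= N)%nat -> csum (fun m => if Nat.eqb m N then a else 0%R) N' = 0%R).
    { induction N'; intros. reflexivity. simpl. rewrite IHN' by lia. destruct (Nat.eqb_spec N' N). lia. ring. }
    symmetry; apply H; lia.
  - rewrite IHN by lia. destruct (Nat.eqb_spec N k). lia. ring. Qed.

Lemma swap_root M N (A : nat -> Complex.C) (p : nat -> nat) : (0 < M)%nat ->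
  csum (fun j => csum (fun m => A m * (zeta M ^ p m) ^ j) N)%C M =
  csum (fun m => A m * RtoC (INR M * dlt M (p m)))%C N.
Proof. intros HM. rewrite csum_swap. apply csum_ext. intros m _. rewrite csum_scal, root_sum by auto. reflexivity. Qed.

Lemma conj_RtoC x : Cconj (RtoC x) = RtoC x.
Proof. unfold Cconj, RtoC. simpl. f_equal. ring. Qed.

Lemma re_twice (s : Complex.C) : RtoC (2 * Re s) = (s + Cconj s)%C.
Proof. destruct s as [x y]. unfold Cconj, RtoC, Cplus, Re. simpl. f_equal; ring. Qed.

Section Car.
Variable e : nat -> Complex.C.
Variable q : Complex.C -> Complex.C.
Hypothesis Hser : forall z, Cmod z < 1 -> CS e z (q z).
Hypothesis Hpos : forall z, Cmod z < 1 -> 0 < Re (q z).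

Lemma carath_M k r K t : (1 <= k)%nat -> 0 < r < 1 -> 0 <= t < 1 ->
  (forall m, Cmod (e m) * r ^ m <= K * t ^ m) ->
  forall M, (2 * k < M)%nat -> forall eps, eps > 0 ->
  Cmod (e k) * r ^ k <= 2 * Re (e 0%nat) + 4 * eps + 4 * (K * (t ^ (M - k) / (1 - t))).
Proof.
  intros Hk Hr Ht Hterm M HM eps He.
  assert (HM0 : (0 < M)%nat) by lia.
  assert (HMr : 0 < INR M) by (apply lt_0_INR; lia).
  set (zj := fun j : nat => (RtoC r * zeta M ^ j)%C).
  assert (Hzj : forall j, Cmod (zj j) = r).
  { intros j. unfold zj. rewrite Cmod_mult, Cmod_R, Cmod_zeta_pow, Rabs_pos_eq by lra. ring. }
  destruct (finite_N (fun j N => Cmod (csum (fun m => e m * zj j ^ m)%C N - q (zj j))%C < eps) M) as [N0 HN0].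
  { intros j _. apply (Hser (zj j)). rewrite Hzj; lra. exact He. }
  set (N := Nat.max N0 (S k)).
  set (Sj := fun j => csum (fun m => e m * zj j ^ m)%C N).
  set (Qj := fun j => q (zj j)).
  assert (HSQ : forall j, (j < M)%nat -> Cmod (Sj j - Qj j)%C < eps).
  { intros j Hj. apply HN0; auto. unfold N; lia. }
  set (wj := fun j : nat => ((zeta M ^ (M - k)) ^ j)%C).
  assert (Hw : forall j, Cmod (wj j) = 1).
  { intros j. unfold wj. rewrite Cmod_pow, Cmod_zeta_pow. apply pow1. }
  assert (Hzjm : forall j m, (zj j ^ m = RtoC (r ^ m) * (zeta M ^ m) ^ j)%C).
  { intros j m. unfold zj. rewrite Cpow_mult_l, RtoC_pow, <- !Cpow_mult_r, Nat.mul_comm. reflexivity. }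
  assert (Eq1 : csum Sj M = csum (fun m => (e m * RtoC (r ^ m)) * RtoC (INR M * dlt M m))%C N).
  { rewrite <- (swap_root M N (fun m => e m * RtoC (r ^ m))%C (fun m => m)) by auto.
    apply csum_ext. intros j _. unfold Sj. apply csum_ext. intros m _. rewrite Hzjm. ring. }
  assert (Eq2 : csum (fun j => Sj j * wj j)%C M =
      csum (fun m => (e m * RtoC (r ^ m)) * RtoC (INR M * dlt M (m + (M - k))))%C N).
  { rewrite <- (swap_root M N (fun m => e m * RtoC (r ^ m))%C (fun m => m + (M - k))%nat) by auto.
    apply csum_ext. intros j _. unfold Sj. rewrite Cmult_comm, <- csum_scal. apply csum_ext. intros m _.
    rewrite Hzjm. unfold wj. rewrite Cpow_add_r, Cpow_mult_l. ring. }
  assert (Eq3 : csum (fun j => Cconj (Sj j) * wj j)%C M =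
      csum (fun m => (Cconj (e m) * RtoC (r ^ m)) * RtoC (INR M * dlt M (m * (M - 1) + (M - k))))%C N).
  { rewrite <- (swap_root M N (fun m => Cconj (e m) * RtoC (r ^ m))%C (fun m => m * (M - 1) + (M - k))%nat) by auto.
    apply csum_ext. intros j _. unfold Sj. rewrite csum_conj, Cmult_comm, <- csum_scal. apply csum_ext. intros m _.
    rewrite Hzjm. unfold wj. rewrite !Cmult_conj, conj_RtoC, Cpow_conj. rewrite zeta_conj by auto.
    rewrite Cpow_add_r, Cpow_mult_l. ring. }

  assert (HQpos : forall j, 0 < Re (Qj j)).
  { intros j. unfold Qj. apply Hpos. rewrite Hzj. lra. }
  assert (Hre_le : forall c : Complex.C, Re c <= Cmod c).
  { intros c. pose proof (re_le_Cmod c). apply Rabs_le_inv' in H. lra. }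
  assert (HNk : (k < N)%nat) by (unfold N; lia).
  set (tail := K * (t ^ (M - k) / (1 - t))).
  assert (Htail : forall n, rsum (fun m => if Nat.leb (M - k) m then K * t ^ m else 0) n <= tail).
  { intros n. unfold tail.
    rewrite (rsum_ext _ (fun m => K * (if Nat.leb (M - k) m then t ^ m else 0))) by (intros m; destruct (Nat.leb _ _); ring).
    rewrite rsum_scal. apply Rmult_le_compat_l. 2: apply geom_tail; auto.
    pose proof (Hterm O). pose proof (Cmod_ge_0 (e O)). rewrite !pow_O in H. lra. }
  set (T := csum (fun j => RtoC (2 * Re (Qj j)) * wj j)%C M).
  assert (Ha : Cmod T <= rsum (fun j => 2 * Re (Qj j)) M).
  { eapply Rle_trans. apply Cmod_csum. apply rsum_le. intros j Hj.
    rewrite Cmod_mult, Hw, Cmod_R, Rabs_pos_eq. lra. pose proof (HQpos j). lra. }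
  assert (Hb : rsum (fun j => 2 * Re (Qj j)) M <= 2 * Re (csum Sj M) + INR M * (2 * eps)).
  { rewrite Re_csum, <- rsum_const, <- rsum_scal, <- rsum_plus. apply rsum_le. intros j Hj.
    specialize (HSQ j Hj). pose proof (re_sub_le (Sj j) (Qj j)). lra. }
  assert (Hc : Re (csum Sj M) <= INR M * Re (e 0%nat) + INR M * tail).
  { rewrite Eq1, Re_csum.
    apply Rle_trans with (rsum (fun m => (if Nat.eqb m 0 then INR M * Re (e 0%nat) else 0) +
        INR M * (if Nat.leb (M - k) m then K * t ^ m else 0)) N).
    - apply rsum_le. intros m Hm. rewrite !re_scal_r.
      destruct (Nat.eqb_spec m 0).
      + subst. rewrite dlt_1 by apply Nat.Div0.mod_0_l. destruct (Nat.leb_spec (M - k) 0). lia. simpl. lra.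
      + destruct (Nat.leb_spec (M - k) m).
        * pose proof (dlt_range M m). pose proof (Hterm m). pose proof (Hre_le (e m)).
          assert (0 <= r ^ m) by (apply pow_le; lra).
          assert (Re (e m) * r ^ m <= K * t ^ m) by nra.
          assert (0 <= K * t ^ m). { pose proof (Cmod_ge_0 (e m)). nra. }
          set (X := Re (e m) * r ^ m) in *.
          assert (X * dlt M m <= K * t ^ m).
          { destruct (Rle_lt_dec 0 X). nra. nra. }
          replace (Re (e m) * r ^ m * (INR M * dlt M m)) with (X * dlt M m * INR M) by (unfold X; ring).
          nra.
        * rewrite dlt_0 by (apply modD; lia). lra.
    - rewrite rsum_plus, rsum_ind0 by lia. rewrite rsum_scal. pose proof (Htail N). nra. }
  set (T' := csum (fun j => RtoC (2 * Re (Sj j)) * wj j)%C M).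
  assert (Hd : Cmod (T - T')%C <= INR M * (2 * eps)).
  { unfold T, T'. rewrite <- csum_minus. eapply Rle_trans. apply Cmod_csum.
    rewrite <- rsum_const. apply rsum_le. intros j Hj.
    replace (RtoC (2 * Re (Qj j)) * wj j - RtoC (2 * Re (Sj j)) * wj j)%C with (RtoC (2 * (Re (Qj j) - Re (Sj j))) * wj j)%C
      by (rewrite !RtoC_mult, !RtoC_minus; ring).
    rewrite Cmod_mult, Hw, Cmod_R. specialize (HSQ j Hj). pose proof (re_sub_le (Sj j) (Qj j)).
    rewrite Rmult_1_r. apply Rabs_le. lra. }
  assert (HT' : T' = (csum (fun j => Sj j * wj j) M + csum (fun j => Cconj (Sj j) * wj j) M)%C).
  { unfold T'. rewrite <- csum_plus. apply csum_ext. intros j _. rewrite re_twice. ring. }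
  rewrite Eq2, Eq3 in HT'.
  set (Ak := (RtoC (INR M) * (e k * RtoC (r ^ k)))%C).
  assert (Hf : Cmod (T' - Ak)%C <= 2 * INR M * tail).
  { rewrite HT'. unfold Ak. rewrite <- (csum_indk (RtoC (INR M) * (e k * RtoC (r ^ k)))%C k N HNk).
    rewrite <- csum_plus, <- csum_minus. eapply Rle_trans. apply Cmod_csum.
    apply Rle_trans with (rsum (fun m => 2 * INR M * (if Nat.leb (M - k) m then K * t ^ m else 0)) N).
    2: { rewrite rsum_scal. pose proof (Htail N). nra. }
    apply rsum_le. intros m Hm. destruct (Nat.leb_spec (M - k) m).
    - destruct (Nat.eqb_spec m k). lia. rewrite Cminus0.
      eapply Rle_trans. apply Cmod_triangle. rewrite !Cmod_mult, Cmod_conj, !Cmod_R, !Rabs_pos_eq by (first [apply pow_le; lra | pose proof (dlt_range M (m + (M-k))); pose proof (dlt_range M (m * (M-1) + (M-k))); nra]).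
      pose proof (dlt_range M (m * (M - 1) + (M - k))). pose proof (dlt_range M (m + (M - k))).
      pose proof (Hterm m). pose proof (Cmod_ge_0 (e m)). assert (0 <= r ^ m) by (apply pow_le; lra).
      assert (0 <= Cmod (e m) * r ^ m) by nra.
      set (X := Cmod (e m) * r ^ m) in *. 
      replace (X * (INR M * dlt M (m + (M - k))) + X * (INR M * dlt M (m * (M - 1) + (M - k))))
        with (X * INR M * (dlt M (m + (M - k)) + dlt M (m * (M - 1) + (M - k)))) by ring.
      assert (X * INR M <= K * t ^ m * INR M) by nra.
      assert (0 <= X * INR M) by nra.
      apply Rle_trans with (X * INR M * 2). apply Rmult_le_compat_l; lra. nra.
    - rewrite (dlt_0 M (m * (M - 1) + (M - k))) by (apply modB; lia).
      destruct (Nat.eqb_spec m k).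
      + subst. rewrite dlt_1 by (apply modC; lia).
        replace (e k * RtoC (r ^ k) * RtoC (INR M * 1) + Cconj (e k) * RtoC (r ^ k) * RtoC (INR M * 0) - RtoC (INR M) * (e k * RtoC (r ^ k)))%C
          with (RtoC 0) by (rewrite !RtoC_mult; ring). rewrite Cmod_0. lra.
      + rewrite dlt_0 by (apply modA; lia).
        replace (e m * RtoC (r ^ m) * RtoC (INR M * 0) + Cconj (e m) * RtoC (r ^ m) * RtoC (INR M * 0) - 0)%C
          with (RtoC 0) by (rewrite !RtoC_mult; ring). rewrite Cmod_0. lra. }
  assert (HAk : Cmod Ak = INR M * (Cmod (e k) * r ^ k)).
  { unfold Ak. rewrite !Cmod_mult, !Cmod_R, !Rabs_pos_eq. ring. apply pow_le; lra. lra. }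
  assert (Hfin : INR M * (Cmod (e k) * r ^ k) <= INR M * (2 * Re (e 0%nat) + 4 * eps + 4 * tail)).
  { rewrite <- HAk.
    replace Ak with (T - (T - T') - (T' - Ak))%C by ring.
    eapply Rle_trans. unfold Cminus at 1. apply Cmod_triangle. rewrite Cmod_opp.
    eapply Rle_trans. apply Rplus_le_compat_r. unfold Cminus at 1. apply Cmod_triangle. rewrite Cmod_opp. nra. }
  apply Rmult_le_reg_l with (INR M); auto.
Qed.
End Car.

Lemma bern2 s k : 0 <= s <= 1 -> 1 - INR k * s <= (1 - s) ^ k.
Proof.
  intros Hs. induction k. simpl. lra.
  rewrite S_INR. simpl. assert (0 <= INR k) by apply pos_INR.
  assert ((1 - s) * (1 - INR k * s) <= (1 - s) * (1 - s) ^ k) by (apply Rmult_le_compat_l; lra). nra.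
Qed.

Section Car2.
Variable e : nat -> Complex.C.
Variable q : Complex.C -> Complex.C.
Hypothesis Hser : forall z, Cmod z < 1 -> CS e z (q z).
Hypothesis Hpos : forall z, Cmod z < 1 -> 0 < Re (q z).

Lemma carath_r k r : (1 <= k)%nat -> 0 < r < 1 -> Cmod (e k) * r ^ k <= 2 * Re (e 0%nat).
Proof.
  intros Hk Hr. set (rho := (1 + r) / 2).
  destruct (CS_bounded _ _ _ (Hser (RtoC rho) ltac:(rewrite Cmod_R, Rabs_pos_eq; unfold rho; lra))) as [K HK].
  assert (HK' : forall n, Cmod (e n) * rho ^ n <= K).
  { intros n. specialize (HK n). rewrite Cmod_mult, Cmod_pow, Cmod_R, Rabs_pos_eq in HK by (unfold rho; lra). exact HK. }
  assert (HK0 : 0 <= K) by (specialize (HK' O); pose proof (Cmod_ge_0 (e O)); rewrite pow_O, Rmult_1_r in HK'; lra).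
  set (t := r / rho).
  assert (Ht : 0 <= t < 1).
  { unfold t, rho. split. apply Rmult_le_pos; [lra| apply Rlt_le, Rinv_0_lt_compat; lra].
    apply Rmult_lt_reg_r with ((1 + r) / 2). lra. unfold Rdiv. rewrite Rmult_assoc, Rinv_l by lra. lra. }
  assert (Hterm : forall m, Cmod (e m) * r ^ m <= K * t ^ m).
  { intros m. assert (E : r ^ m = rho ^ m * t ^ m) by (rewrite <- Rpow_mult_distr; f_equal; unfold t, rho; field; lra).
    rewrite E. specialize (HK' m). assert (0 <= t ^ m) by (apply pow_le; lra). nra. }
  destruct (Rle_lt_dec (Cmod (e k) * r ^ k) (2 * Re (e 0%nat))) as [H|H]; auto. exfalso.
  set (g := Cmod (e k) * r ^ k - 2 * Re (e 0%nat)).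
  destruct (pow_lt_1_zero t ltac:(rewrite Rabs_pos_eq; lra) (g * (1 - t) / (16 * (K + 1)))) as [N' HN'].
  { apply Rdiv_lt_0_compat. unfold g. nra. lra. }
  set (M := (2 * k + 1 + N')%nat).
  specialize (HN' (M - k)%nat ltac:(unfold M; lia)). rewrite Rabs_pos_eq in HN' by (apply pow_le; lra).
  pose proof (carath_M e q Hser Hpos k r K t Hk Hr Ht Hterm M ltac:(unfold M; lia) (g / 16) ltac:(unfold g; lra)) as Hc.
  assert (4 * (K * (t ^ (M - k) / (1 - t))) <= g / 4).
  { assert (t ^ (M - k) / (1 - t) <= g / (16 * (K + 1))).
    { unfold Rdiv. apply Rmult_le_reg_r with (1 - t). lra. rewrite Rmult_assoc, Rinv_l, Rmult_1_r by lra.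
      unfold Rdiv in HN'. apply Rlt_le. replace (g * / (16 * (K + 1)) * (1 - t)) with (g * (1 - t) * / (16 * (K + 1))) by ring. exact HN'. }
    assert (K * (t ^ (M - k) / (1 - t)) <= K * (g / (16 * (K + 1)))) by (apply Rmult_le_compat_l; auto).
    assert (K * (g / (16 * (K + 1))) <= g / 16).
    { unfold Rdiv. apply Rmult_le_reg_r with (16 * (K + 1)). lra.
      replace (K * (g * / (16 * (K + 1))) * (16 * (K + 1))) with (K * g) by (field; lra).
      replace (g * / 16 * (16 * (K + 1))) with (g * (K + 1)) by field. unfold g. nra. }
    lra. }
  unfold g in *. lra.
Qed.

Lemma carath k : (1 <= k)%nat -> Cmod (e k) <= 2 * Re (e 0%nat).
Proof.
  intros Hk. set (X := Cmod (e k)). set (Y := 2 * Re (e 0%nat)).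
  destruct (Rle_lt_dec X Y) as [H|H]; auto. exfalso.
  assert (HX : 0 <= X) by apply Cmod_ge_0.
  assert (Hk0 : 0 <= INR k) by apply pos_INR.
  set (s := Rmin (1/2) ((X - Y) / (2 * (X * INR k + 1)))).
  assert (Hs0 : 0 < s).
  { unfold s. apply Rmin_pos. lra. apply Rdiv_lt_0_compat. lra. nra. }
  assert (Hs1 : s <= 1/2) by apply Rmin_l.
  assert (Hs2 : s <= (X - Y) / (2 * (X * INR k + 1))) by apply Rmin_r.
  pose proof (carath_r k (1 - s) Hk ltac:(lra)) as Hc. fold X Y in Hc.
  pose proof (bern2 s k ltac:(lra)).
  assert (X * INR k * s <= (X - Y) / 2).
  { apply Rle_trans with (X * INR k * ((X - Y) / (2 * (X * INR k + 1)))). apply Rmult_le_compat_l; nra.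
    unfold Rdiv. apply Rmult_le_reg_r with (2 * (X * INR k + 1)). nra.
    replace (X * INR k * ((X - Y) * / (2 * (X * INR k + 1))) * (2 * (X * INR k + 1))) with (X * INR k * (X - Y)) by (field; nra).
    nra. }
  assert (X * (1 - INR k * s) <= X * (1 - s) ^ k) by (apply Rmult_le_compat_l; auto).
  nra.
Qed.
End Car2.


Lemma align (a b : Complex.C) : exists eps, Cmod eps = 1 /\ Cmod (a + eps * b)%C = Cmod a + Cmod b.
Proof.
  destruct (Req_dec (Cmod a) 0) as [Ha|Ha].
  { exists (RtoC 1). split. apply Cmod_1. apply Cmod_eq_0 in Ha. subst a.
    rewrite Cmod_0. replace (RtoC 0 + RtoC 1 * b)%C with b by ring. ring. }
  destruct (Req_dec (Cmod b) 0) as [Hb|Hb].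
  { exists (RtoC 1). split. apply Cmod_1. rewrite Hb. apply Cmod_eq_0 in Hb. subst b.
    replace (a + RtoC 1 * RtoC 0)%C with a by ring. ring. }
  assert (HA : RtoC (Cmod a) <> RtoC 0) by (intros E; apply Ha; injection E; auto).
  assert (HB : RtoC (Cmod b) <> RtoC 0) by (intros E; apply Hb; injection E; auto).
  set (A := RtoC (Cmod a)) in *. set (B := RtoC (Cmod b)) in *.
  set (u := (a / A)%C). set (v := (Cconj b / B)%C).
  assert (Hu : Cmod u = 1).
  { unfold u, A. rewrite Cmod_div, Cmod_R, Rabs_pos_eq by (auto; apply Cmod_ge_0). field. auto. }
  assert (Hv : Cmod v = 1).
  { unfold v, B. rewrite Cmod_div, Cmod_conj, Cmod_R, Rabs_pos_eq by (auto; apply Cmod_ge_0). field. auto. }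
  exists (u * v)%C. split. rewrite Cmod_mult, Hu, Hv. ring.
  assert (HB2 : (b * Cconj b)%C = (B * B)%C).
  { rewrite <- Cmod2_conj. unfold B. rewrite RtoC_pow. simpl. ring. }
  assert (E : (a + u * v * b)%C = (u * RtoC (Cmod a + Cmod b))%C).
  { unfold u, v. replace (a / A * (Cconj b / B) * b)%C with (a / A * ((b * Cconj b) / B))%C by (field; auto).
    rewrite HB2, RtoC_plus. fold A B. field. auto. }
  rewrite E, Cmod_mult, Hu, Cmod_R, Rabs_pos_eq. ring.
  pose proof (Cmod_ge_0 a). pose proof (Cmod_ge_0 b). lra.
Qed.

Theorem theorem3p2 (alpha beta : R) (a b : nat -> Cplx) (h g : Cplx -> Cplx)
  (Halpha : 0 <= alpha) (Hbeta : 0 <= beta < 1)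
  (Ha0 : a 0%nat = (0, 0)) (Ha1 : a 1%nat = (1, 0))
  (Hb0 : b 0%nat = (0, 0)) (Hb1 : b 1%nat = (0, 0))
  (Hh : forall z, inD z -> Cseries a z (h z))
  (Hg : forall z, inD z -> Cseries b z (g z))
  (HW : W_H0 alpha beta h g) :
  forall n : nat, (2 <= n)%nat ->
    let bound := 2 * (1 - beta) / (INR n * (1 + alpha * (INR n - 1))) in
    Cnorm (a n) + Cnorm (b n) <= bound /\
    Rabs (Cnorm (a n) - Cnorm (b n)) <= bound /\
    Cnorm (a n) <= bound.
Proof.
  intros n Hn bound.
  destruct HW as [h1 [h2 [g1 [g2 HW]]]].
  assert (HD : forall z, Cmod z < 1 -> inD z) by (intros z Hz; unfold inD; rewrite Cnorm_Cmod; exact Hz).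
  assert (Sa : forall w, Cmod w < 1 -> CS a w (h w)) by (intros; apply Cseries_CS, Hh, HD; auto).
  assert (Sb : forall w, Cmod w < 1 -> CS b w (g w)) by (intros; apply Cseries_CS, Hg, HD; auto).
  set (a1 := fun m => (RtoC (INR (S m)) * a (S m))%C).
  set (b1 := fun m => (RtoC (INR (S m)) * b (S m))%C).
  assert (Sa1 : forall z, Cmod z < 1 -> CS a1 z (h1 z)).
  { intros z Hz. apply (deriv_CS a h); auto. apply cderiv_cder. apply (HW z (HD z Hz)). }
  assert (Sb1 : forall z, Cmod z < 1 -> CS b1 z (g1 z)).
  { intros z Hz. apply (deriv_CS b g); auto. apply cderiv_cder. apply (HW z (HD z Hz)). }
  set (a2 := fun m => (RtoC (INR (S m)) * a1 (S m))%C).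
  set (b2 := fun m => (RtoC (INR (S m)) * b1 (S m))%C).
  assert (Sa2 : forall z, Cmod z < 1 -> CS a2 z (h2 z)).
  { intros z Hz. apply (deriv_CS a1 h1); auto. apply cderiv_cder. apply (HW z (HD z Hz)). }
  assert (Sb2 : forall z, Cmod z < 1 -> CS b2 z (g2 z)).
  { intros z Hz. apply (deriv_CS b1 g1); auto. apply cderiv_cder. apply (HW z (HD z Hz)). }
  set (sh := fun (c : nat -> Complex.C) m => match m with O => RtoC 0 | S k => c k end).
  set (cH := fun m => (a1 m + RtoC alpha * sh a2 m)%C).
  set (cG := fun m => (b1 m + RtoC alpha * sh b2 m)%C).
  destruct (align (a n) (b n)) as [ep [Hep1 Hep2]].
  set (e := fun m => (cH m + ep * cG m + match m with O => RtoC (- beta) | _ => RtoC 0 end)%C).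
  set (q := fun z => (h1 z + RtoC alpha * (z * h2 z) + ep * (g1 z + RtoC alpha * (z * g2 z)) + RtoC (- beta))%C).
  assert (Sq : forall z, Cmod z < 1 -> CS e z (q z)).
  { intros z Hz. apply CS_plus. apply CS_plus.
    - apply CS_plus. auto. apply CS_scal. apply (CS_shift a2). auto.
    - apply CS_scal. apply CS_plus. auto. apply CS_scal. apply (CS_shift b2). auto.
    - apply (CS_const (RtoC (- beta))). }
  assert (Hpos : forall z, Cmod z < 1 -> 0 < Re (q z)).
  { intros z Hz. destruct (HW z (HD z Hz)) as [_ [_ [_ [_ Hineq]]]].
    rewrite Cnorm_Cmod in Hineq.
    set (G := (g1 z + RtoC alpha * (z * g2 z))%C) in *.
    set (H := (h1 z + RtoC alpha * (z * h2 z))%C) in *.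
    change (Cre H - beta > Cmod G) in Hineq.
    assert (Re (ep * G)%C >= - Cmod G).
    { pose proof (re_le_Cmod (ep * G)%C). rewrite Cmod_mult, Hep1, Rmult_1_l in H0.
      apply Rabs_le_inv' in H0. lra. }
    unfold q. fold G H. unfold Cre in Hineq.
    replace (Re (H + ep * G + RtoC (- beta))%C) with (fst H + Re (ep * G)%C - beta) by (unfold Re; simpl; ring).
    lra. }
  pose proof (carath e q Sq Hpos (n - 1)%nat ltac:(lia)) as Hc.
  assert (He0 : Re (e 0%nat) = 1 - beta).
  { unfold e, cH, cG, a1, b1, sh. simpl INR. rewrite Ha1, Hb1. destruct ep as [ex ey].
    unfold Re, Cplus, Cmult, RtoC. simpl. ring. }
  destruct n as [|[|k]]; try lia.
  replace (S (S k) - 1)%nat with (S k) in Hc by lia.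
  set (fac := INR (S (S k)) * (1 + alpha * (INR (S (S k)) - 1))).
  assert (Hfac : 0 < fac).
  { unfold fac. rewrite !S_INR. pose proof (pos_INR k). apply Rmult_lt_0_compat. lra. nra. }
  assert (Ek : e (S k) = (RtoC fac * (a (S (S k)) + ep * b (S (S k))))%C).
  { replace (RtoC fac) with (RtoC (INR (S (S k))) + RtoC alpha * (RtoC (INR (S k)) * RtoC (INR (S (S k)))))%C.
    unfold e, cH, cG, a2, b2, sh. unfold a1, b1. ring.
    rewrite <- RtoC_mult, <- RtoC_mult, <- RtoC_plus. f_equal. unfold fac. rewrite (S_INR (S k)). ring. }
  rewrite Ek, Cmod_mult, Cmod_R, Rabs_pos_eq, Hep2, He0 in Hc by lra.
  rewrite !Cnorm_Cmod.
  assert (Hs : Cmod (a (S (S k))) + Cmod (b (S (S k))) <= bound).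
  { unfold bound. fold fac. apply Rmult_le_reg_l with fac. auto.
    unfold Rdiv. rewrite (Rmult_comm (2 * (1 - beta))), <- Rmult_assoc, Rinv_r, Rmult_1_l by lra. lra. }
  pose proof (Cmod_ge_0 (a (S (S k)))). pose proof (Cmod_ge_0 (b (S (S k)))).
  split; auto. split. apply Rabs_le. lra. lra.
Qed.
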